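(* Suppose $t=t(n)=\alpha_0(n)+O(1)$ is an integer. Uniformly over all $k\le n/2$ with $k=n/(t-\Theta(1))$, we have (partial derivatives with $t$ held fixed) \[ \frac{\partial}{\partial k}\hat L_0(n,k,t)=\Theta\Big(\frac{\log^3n}{n}\Big),\qquad \frac{\partial}{\partial n}\hat L_0(n,k,t)=-\Theta\Big(\frac{\log^2 n}{n}\Big), \] and \[ \frac{\partial}{\partial k}L_0(n,k,t)=\frac{2}{\log2}\log^2n+O(\log n\log\log n). \]
   Context: $\alpha_0(n)=2\log_2 n-2\log_2\log_2 n+2\log_2(e/2)+1$, $d_i=2^{\binom i2}i!$. For positive integer $t$ and reals $\rho\in(1,t)$, $k>0$: $\tilde L_0(\rho,k,t)=\sup\{\rho\log(\rho k)-\log k-\rho+1-\sum_{i=1}^tp_i\log(p_id_i)\}$, the supremum over $(p_i)_{i=1}^t\in[0,1]^t$ with $\sum_ip_i=1$, $\sum_iip_i=\rho$ (with $0\log0=0$); $\hat L_0(n,k,t)=\tilde L_0(n/k,k,t)$ and $L_0(n,k,t)=k\,\hat L_0(n,k,t)$. Logarithms are natural. *)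

(* Defs.v *)
From Stdlib Require Import Reals Lra.
From Coquelicot Require Import Coquelicot.
Open Scope R_scope.

Definition log2 (x : R) : R := ln x / ln 2.

Definition alpha0 (n : R) : R :=
  2 * log2 n - 2 * log2 (log2 n) + 2 * log2 (exp 1 / 2) + 1.

Definition d (i : nat) : R := 2 ^ (Nat.div (i * (i - 1)) 2) * INR (Factorial.fact i).

Fixpoint sum1 (f : nat -> R) (t : nat) : R :=
  match t with
  | O => 0
  | S t' => sum1 f t' + f (S t')
  end.

Definition xlog (x c : R) : R := if Req_EM_T x 0 then 0 else x * ln (x * c).

Definition admissible (rho : R) (t : nat) (p : nat -> R) : Prop :=
  (forall i, (1 <= i <= t)%nat -> 0 <= p i <= 1) /\
  sum1 p t = 1 /\ sum1 (fun i => INR i * p i) t = rho.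

Definition Lobj (rho k : R) (t : nat) (p : nat -> R) : R :=
  rho * ln (rho * k) - ln k - rho + 1 - sum1 (fun i => xlog (p i) (d i)) t.

Definition Ltilde0 (rho k : R) (t : nat) : R :=
  real (Lub_Rbar (fun v => exists p, admissible rho t p /\ v = Lobj rho k t p)).

Definition Lhat0 (n k : R) (t : nat) : R := Ltilde0 (n / k) k t.
Definition L0 (n k : R) (t : nat) : R := k * Lhat0 n k t.

(* Main.v *)
Require Import Defs.
From Stdlib Require Import Reals Lra Lia Psatz ZArith.
From Coquelicot Require Import Coquelicot.
Open Scope R_scope.

Lemma sum1_ext (f g : nat -> R) t : (forall i, (1 <= i <= t)%nat -> f i = g i) -> sum1 f t = sum1 g t.
Proof. induction t; simpl; intros H; auto. rewrite IHt. rewrite H; auto; lia. intros; apply H; lia. Qed.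

Lemma sum1_plus f g t : sum1 (fun i => f i + g i) t = sum1 f t + sum1 g t.
Proof. induction t; simpl; [lra|rewrite IHt; lra]. Qed.

Lemma sum1_scal c f t : sum1 (fun i => c * f i) t = c * sum1 f t.
Proof. induction t; simpl; [lra|rewrite IHt; lra]. Qed.

Lemma sum1_opp f t : sum1 (fun i => - f i) t = - sum1 f t.
Proof. induction t; simpl; [lra|rewrite IHt; lra]. Qed.

Lemma sum1_le f g t : (forall i, (1 <= i <= t)%nat -> f i <= g i) -> sum1 f t <= sum1 g t.
Proof. induction t; simpl; intros H; [lra|]. assert (f (S t) <= g (S t)) by (apply H; lia).
 assert (sum1 f t <= sum1 g t) by (apply IHt; intros; apply H; lia). lra. Qed.

Lemma sum1_lt f g t j : (1 <= j <= t)%nat -> (forall i, (1 <= i <= t)%nat -> f i <= g i) -> f j < g j -> sum1 f t < sum1 g t.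
Proof. induction t; simpl; intros Hj H Hs; [lia|].
 destruct (Nat.eq_dec j (S t)) as [->|Hn].
 - assert (sum1 f t <= sum1 g t) by (apply sum1_le; intros; apply H; lia). lra.
 - assert (f (S t) <= g (S t)) by (apply H; lia).
   assert (sum1 f t < sum1 g t) by (apply IHt; auto; [lia| intros; apply H; lia]). lra. Qed.

Lemma sum1_nonneg f t : (forall i, (1 <= i <= t)%nat -> 0 <= f i) -> 0 <= sum1 f t.
Proof. intros H. replace 0 with (sum1 (fun _ => 0) t). apply sum1_le; auto.
 clear H; induction t; simpl; auto; lra. Qed.

Lemma sum1_const c t : sum1 (fun _ => c) t = INR t * c.
Proof. induction t; simpl sum1; [simpl; lra|]. rewrite IHt, S_INR. lra. Qed.

Lemma sum1_ge_term f t j : (1 <= j <= t)%nat -> (forall i, (1 <= i <= t)%nat -> 0 <= f i) -> f j <= sum1 f t.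
Proof. induction t; simpl; intros Hj H; [lia|].
 destruct (Nat.eq_dec j (S t)) as [->|Hn].
 - assert (0 <= sum1 f t) by (apply sum1_nonneg; intros; apply H; lia). lra.
 - assert (0 <= f (S t)) by (apply H; lia).
   assert (f j <= sum1 f t) by (apply IHt; [lia| intros; apply H; lia]). lra. Qed.

Lemma sum1_split f a b : sum1 f (a + b) = sum1 f a + sum1 (fun j => f (a + j)%nat) b.
Proof. induction b; simpl. rewrite Nat.add_0_r; lra. rewrite Nat.add_succ_r; simpl. rewrite IHb; lra. Qed.

Lemma sum1_pos f t : (1 <= t)%nat -> (forall i, (1 <= i <= t)%nat -> 0 < f i) -> 0 < sum1 f t.
Proof. intros Ht H. apply Rlt_le_trans with (f t). apply H; lia. apply sum1_ge_term. lia. intros; left; apply H; auto. Qed.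

Lemma sum1_ub f t c : (forall i, (1 <= i <= t)%nat -> f i <= c) -> sum1 f t <= INR t * c.
Proof. intros H; rewrite <- sum1_const; apply sum1_le; auto. Qed.

Lemma ln_lt_xm1 x : 0 < x -> x <> 1 -> ln x < x - 1.
Proof. intros Hx H1. assert (ln x <> 0). { intro E. apply H1. rewrite <- (exp_ln x Hx), E, exp_0. auto. }
 pose proof (exp_ineq1 (ln x) H). rewrite exp_ln in H0; auto. lra. Qed.

Lemma ln_le_xm1 x : 0 < x -> ln x <= x - 1.
Proof. intros Hx. pose proof (exp_ineq1_le (ln x)). rewrite exp_ln in H; auto. lra. Qed.

Lemma d_S i : d (S i) = d i * 2 ^ i * INR (S i).
Proof. unfold d. replace (S i * (S i - 1))%nat with (i * (i - 1) + i * 2)%nat by (destruct i; simpl; nia).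
 rewrite Nat.div_add by lia. rewrite pow_add. simpl (Factorial.fact (S i)).
 replace (Factorial.fact i + i * Factorial.fact i)%nat with (S i * Factorial.fact i)%nat by (simpl; lia).
 rewrite mult_INR. ring. Qed.

Lemma d_0 : d 0 = 1.
Proof. unfold d. simpl. lra. Qed.

Lemma d_pos i : 0 < d i.
Proof. induction i. rewrite d_0; lra. rewrite d_S. apply Rmult_lt_0_compat. apply Rmult_lt_0_compat; auto. apply pow_lt; lra. apply lt_0_INR; lia. Qed.

Lemma fact_pos i : 1 <= INR (Factorial.fact i).
Proof. replace 1 with (INR 1) by auto. apply le_INR. pose proof (Factorial.lt_O_fact i). lia. Qed.

Lemma fact_le_pow i : INR (Factorial.fact i) <= INR i ^ i.
Proof. induction i. simpl; lra. simpl (Factorial.fact (S i)).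
 replace (Factorial.fact i + i * Factorial.fact i)%nat with (S i * Factorial.fact i)%nat by (simpl; lia).
 rewrite mult_INR, <- tech_pow_Rmult. apply Rmult_le_compat_l. apply pos_INR.
 apply Rle_trans with (INR i ^ i); auto. apply pow_incr. split. apply pos_INR. apply le_INR; lia. Qed.

Lemma ln_d t : ln (d t) = INR t * (INR t - 1) / 2 * ln 2 + ln (INR (Factorial.fact t)).
Proof. induction t. rewrite d_0, ln_1. simpl. rewrite ln_1. field.
 rewrite d_S. rewrite !ln_mult; try (apply d_pos || (apply pow_lt; lra) || (apply lt_0_INR; lia) || (apply Rmult_lt_0_compat; [apply d_pos|apply pow_lt; lra])).
 rewrite IHt. rewrite ln_pow by lra. simpl (Factorial.fact (S t)).
 replace (Factorial.fact t + t * Factorial.fact t)%nat with (S t * Factorial.fact t)%nat by (simpl; lia).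
 rewrite mult_INR, ln_mult. rewrite S_INR. field. apply lt_0_INR; lia. pose proof (fact_pos t); lra. Qed.

Definition w (lam : R) (i : nat) : R := exp (- lam * INR i) / d i.
Definition Z (lam : R) (t : nat) : R := sum1 (w lam) t.
Definition S1 (lam : R) (t : nat) : R := sum1 (fun i => INR i * w lam i) t.
Definition m (lam : R) (t : nat) : R := S1 lam t / Z lam t.
Definition q (lam : R) (t : nat) (i : nat) : R := w lam i / Z lam t.

Lemma w_pos lam i : 0 < w lam i.
Proof. unfold w. apply Rdiv_lt_0_compat. apply exp_pos. apply d_pos. Qed.

Lemma Z_pos lam t : (1 <= t)%nat -> 0 < Z lam t.
Proof. intros; apply sum1_pos; auto. intros; apply w_pos. Qed.

Lemma q_pos lam t i : (1 <= t)%nat -> 0 < q lam t i.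
Proof. intros; unfold q; apply Rdiv_lt_0_compat. apply w_pos. apply Z_pos; auto. Qed.

Lemma q_adm lam t : (1 <= t)%nat -> admissible (m lam t) t (q lam t).
Proof. intros Ht. pose proof (Z_pos lam t Ht). split; [|split].
 - intros i Hi. pose proof (q_pos lam t i Ht). split. lra. unfold q.
   apply Rmult_le_reg_r with (Z lam t); auto. unfold Rdiv; rewrite Rmult_assoc, Rinv_l by lra.
   rewrite Rmult_1_r, Rmult_1_l. apply sum1_ge_term; auto. intros; left; apply w_pos.
 - unfold q. unfold Rdiv. rewrite (sum1_ext _ (fun i => / Z lam t * w lam i)) by (intros; ring).
   rewrite sum1_scal. change (sum1 (w lam) t) with (Z lam t). field. lra.
 - unfold q, m, S1. unfold Rdiv. rewrite (sum1_ext _ (fun i => / Z lam t * (INR i * w lam i))) by (intros; ring).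
   rewrite sum1_scal. ring. Qed.

Lemma ln_q lam t i : (1 <= t)%nat -> ln (q lam t i * d i) = - lam * INR i - ln (Z lam t).
Proof. intros Ht. pose proof (Z_pos lam t Ht). pose proof (d_pos i). unfold q, w.
 replace (exp (- lam * INR i) / d i / Z lam t * d i) with (exp (- lam * INR i) / Z lam t) by (field; lra).
 rewrite ln_div, ln_exp; auto. apply exp_pos. Qed.

Lemma gibbs_term lam t p i : (1 <= t)%nat -> 0 <= p ->
  - xlog p (d i) - lam * (INR i * p) - ln (Z lam t) * p <= q lam t i - p.
Proof. intros Ht Hp. unfold xlog. destruct (Req_EM_T p 0) as [->|Hn].
 - pose proof (q_pos lam t i Ht). lra.
 - assert (Hp' : 0 < p) by lra. pose proof (q_pos lam t i Ht). pose proof (d_pos i).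
   pose proof (ln_le_xm1 (q lam t i / p) (Rdiv_lt_0_compat _ _ H Hp')).
   assert (E: ln (q lam t i / p) = - lam * INR i - ln (Z lam t) - ln (p * d i)).
   { rewrite <- ln_q with (i := i); auto. rewrite <- ln_div. f_equal. field. split; lra.
     apply Rmult_lt_0_compat; auto. apply Rmult_lt_0_compat; auto. }
   rewrite E in H1. apply Rmult_le_compat_l with (r := p) in H1; [|lra].
   replace (p * (q lam t i / p - 1)) with (q lam t i - p) in H1 by (field; lra). nra. Qed.

Lemma gibbs_term_strict lam t p i : (1 <= t)%nat -> 0 < p -> p <> q lam t i ->
  - xlog p (d i) - lam * (INR i * p) - ln (Z lam t) * p < q lam t i - p.
Proof. intros Ht Hp Hne. unfold xlog. destruct (Req_EM_T p 0) as [->|Hn]. lra.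
 pose proof (q_pos lam t i Ht). pose proof (d_pos i).
 assert (q lam t i / p <> 1). { intro E. apply Hne. apply Rmult_eq_reg_r with (/p). unfold Rdiv in E. rewrite Rinv_r by lra. lra. apply Rinv_neq_0_compat; lra. }
 pose proof (ln_lt_xm1 (q lam t i / p) (Rdiv_lt_0_compat _ _ H Hp) H1).
 assert (E: ln (q lam t i / p) = - lam * INR i - ln (Z lam t) - ln (p * d i)).
 { rewrite <- ln_q with (i := i); auto. rewrite <- ln_div. f_equal. field. split; lra.
   apply Rmult_lt_0_compat; auto. apply Rmult_lt_0_compat; auto. }
 rewrite E in H2. apply Rmult_lt_compat_l with (r := p) in H2; [|lra].
 replace (p * (q lam t i / p - 1)) with (q lam t i - p) in H2 by (field; lra). nra. Qed.

Definition Hent (p : nat -> R) (t : nat) : R := - sum1 (fun i => xlog (p i) (d i)) t.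

Lemma sum1_lin3 a f g b c t : sum1 (fun i => - a i - b * f i - c * g i) t = - sum1 a t - b * sum1 f t - c * sum1 g t.
Proof. induction t; simpl; [ring|rewrite IHt; ring]. Qed.
Lemma sum1_minus f g t : sum1 (fun i => f i - g i) t = sum1 f t - sum1 g t.
Proof. induction t; simpl; [ring|rewrite IHt; ring]. Qed.

Lemma gibbs lam t rho p : (1 <= t)%nat -> admissible rho t p -> Hent p t <= lam * rho + ln (Z lam t).
Proof. intros Ht [Hb [Hs Hm]]. unfold Hent.
 assert (sum1 (fun i => - xlog (p i) (d i) - lam * (INR i * p i) - ln (Z lam t) * p i) t <= sum1 (fun i => q lam t i - p i) t).
 { apply sum1_le. intros i Hi. apply gibbs_term; auto. apply Hb; auto. }
 rewrite (sum1_lin3 (fun i => xlog (p i) (d i)) (fun i => INR i * p i) p), sum1_minus in H.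
 rewrite Hs, Hm in H. destruct (q_adm lam t Ht) as [_ [Hq _]]. rewrite Hq in H. lra. Qed.

Lemma gibbs_strict lam t rho p j : (1 <= t)%nat -> admissible rho t p -> (1 <= j <= t)%nat ->
  (forall i, (1 <= i <= t)%nat -> 0 < p i) -> p j <> q lam t j ->
  Hent p t < lam * rho + ln (Z lam t).
Proof. intros Ht [Hb [Hs Hm]] Hj Hpos Hne. unfold Hent.
 assert (sum1 (fun i => - xlog (p i) (d i) - lam * (INR i * p i) - ln (Z lam t) * p i) t < sum1 (fun i => q lam t i - p i) t).
 { apply sum1_lt with j; auto. intros i Hi. apply gibbs_term; auto. apply Hb; auto.
   apply gibbs_term_strict; auto. }
 rewrite (sum1_lin3 (fun i => xlog (p i) (d i)) (fun i => INR i * p i) p), sum1_minus in H.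
 rewrite Hs, Hm in H. destruct (q_adm lam t Ht) as [_ [Hq _]]. rewrite Hq in H. lra. Qed.

Lemma gibbs_eq lam t : (1 <= t)%nat -> Hent (q lam t) t = lam * m lam t + ln (Z lam t).
Proof. intros Ht. destruct (q_adm lam t Ht) as [_ [Hq Hm]]. unfold Hent.
 rewrite (sum1_ext _ (fun i => - lam * (INR i * q lam t i) + (- ln (Z lam t)) * q lam t i)).
 rewrite sum1_plus, !sum1_scal, Hq, Hm. ring.
 intros i Hi. unfold xlog. destruct (Req_EM_T (q lam t i) 0) as [E|_].
 pose proof (q_pos lam t i Ht); lra. rewrite ln_q; auto. ring. Qed.

Lemma Ltilde0_eq lam t k : (1 <= t)%nat ->
  Ltilde0 (m lam t) k t = m lam t * ln (m lam t * k) - ln k - m lam t + 1 + (lam * m lam t + ln (Z lam t)).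
Proof. intros Ht. unfold Ltilde0.
 rewrite (is_lub_Rbar_unique _ (Finite (m lam t * ln (m lam t * k) - ln k - m lam t + 1 + (lam * m lam t + ln (Z lam t))))).
 reflexivity. split.
 - intros v [p [Hp ->]]. simpl. unfold Lobj. pose proof (gibbs lam t _ p Ht Hp). unfold Hent in H. lra.
 - intros b Hb. apply Hb. exists (q lam t). split. apply q_adm; auto. unfold Lobj.
   pose proof (gibbs_eq lam t Ht). unfold Hent in H. lra. Qed.

Lemma q_differ lam1 lam2 t : (2 <= t)%nat -> lam1 <> lam2 ->
  exists j, (1 <= j <= t)%nat /\ q lam1 t j <> q lam2 t j.
Proof. intros Ht Hne. destruct (Req_EM_T (q lam1 t 1) (q lam2 t 1)) as [E1|N1]; [|exists 1%nat; split; auto; lia].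
 destruct (Req_EM_T (q lam1 t 2) (q lam2 t 2)) as [E2|N2]; [|exists 2%nat; split; auto; lia].
 exfalso. apply Hne. unfold q, w in E1, E2.
 pose proof (Z_pos lam1 t ltac:(lia)). pose proof (Z_pos lam2 t ltac:(lia)).
 pose proof (d_pos 1). pose proof (d_pos 2).
 simpl INR in E1, E2. rewrite !Rmult_1_r in E1.
 replace (- lam1 * (1 + 1)) with (- lam1 + - lam1) in E2 by ring.
 replace (- lam2 * (1 + 1)) with (- lam2 + - lam2) in E2 by ring. rewrite !exp_plus in E2.
 pose proof (exp_pos (- lam1)). pose proof (exp_pos (- lam2)).
 set (x1 := exp (- lam1)) in *. set (x2 := exp (- lam2)) in *.
 assert (F1 : x1 * Z lam2 t = x2 * Z lam1 t).
 { unfold Rdiv in E1. apply (f_equal (fun y => y * d 1 * Z lam1 t * Z lam2 t)) in E1.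
   field_simplify in E1; [nra| split; lra | split; lra]. }
 assert (F2 : x1 * x1 * Z lam2 t = x2 * x2 * Z lam1 t).
 { unfold Rdiv in E2. apply (f_equal (fun y => y * d 2 * Z lam1 t * Z lam2 t)) in E2.
   field_simplify in E2; [nra| split; lra | split; lra]. }
 assert (x1 = x2). { assert (x1 * (x2 * Z lam1 t) = x2 * (x2 * Z lam1 t)) by nra.
   apply Rmult_eq_reg_r in H5; auto. nra. }
 apply exp_inv in H5. lra. Qed.

Lemma m_strict lam1 lam2 t : (2 <= t)%nat -> lam1 < lam2 -> m lam2 t < m lam1 t.
Proof. intros Ht Hl. assert (Ht1 : (1 <= t)%nat) by lia.
 destruct (q_differ lam1 lam2 t Ht ltac:(lra)) as [j [Hj Hn]].
 assert (A : Hent (q lam1 t) t < lam2 * m lam1 t + ln (Z lam2 t)).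
 { apply gibbs_strict with j; auto. apply q_adm; auto. intros; apply q_pos; auto. }
 assert (B : Hent (q lam2 t) t < lam1 * m lam2 t + ln (Z lam1 t)).
 { apply gibbs_strict with j; auto. apply q_adm; auto. intros; apply q_pos; auto. }
 rewrite gibbs_eq in A, B; auto. nra. Qed.

Lemma cont_sum1 (f : R -> nat -> R) t : (forall i, continuity (fun x => f x i)) -> continuity (fun x => sum1 (f x) t).
Proof. intros H. induction t; simpl. apply continuity_const. intros x y; auto.
 apply (continuity_plus (fun x => sum1 (f x) t) (fun x => f x (S t))); auto. Qed.

Lemma m_cont t : (1 <= t)%nat -> continuity (fun x => m x t).
Proof. intros Ht. unfold m. apply (continuity_div (fun x => S1 x t) (fun x => Z x t)).
 apply cont_sum1. intros i. unfold w. reg.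
 apply cont_sum1. intros i. unfold w. reg.
 intros x. pose proof (Z_pos x t Ht). lra. Qed.

Lemma m_ivt t a b r : (1 <= t)%nat -> a < b -> m b t < r < m a t -> exists lam, a <= lam <= b /\ m lam t = r.
Proof. intros Ht Hab Hr. destruct (IVT (fun x => r - m x t) a b) as [z [Hz Ez]]; auto.
 apply (continuity_minus (fun _ => r) (fun x => m x t)). apply continuity_const. intros x y; auto. apply m_cont; auto.
 lra. lra. exists z. split; auto. lra. Qed.

Definition Phi (t : nat) (r : R) : R := Ltilde0 r 1 t - (r * ln r - r + 1).

Lemma Phi_eq lam t : (1 <= t)%nat -> Phi t (m lam t) = lam * m lam t + ln (Z lam t).
Proof. intros Ht. unfold Phi. rewrite Ltilde0_eq; auto. rewrite Rmult_1_r, ln_1. ring. Qed.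

Lemma Ltilde0_Phi lam t k : (1 <= t)%nat ->
  Ltilde0 (m lam t) k t = m lam t * ln (m lam t * k) - ln k - m lam t + 1 + Phi t (m lam t).
Proof. intros Ht. rewrite Ltilde0_eq, Phi_eq; auto. Qed.

Lemma near_sol lam0 t eps : (2 <= t)%nat -> 0 < eps -> exists delta, 0 < delta /\
  forall r, Rabs (r - m lam0 t) < delta -> exists lam, Rabs (lam - lam0) <= eps /\ m lam t = r.
Proof. intros Ht He. pose proof (m_strict (lam0 - eps) lam0 t Ht ltac:(lra)).
 pose proof (m_strict lam0 (lam0 + eps) t Ht ltac:(lra)).
 exists (Rmin (m lam0 t - m (lam0 + eps) t) (m (lam0 - eps) t - m lam0 t)). split.
 apply Rmin_pos; lra. intros r Hr.
 assert (Hr1 := Rmin_l (m lam0 t - m (lam0 + eps) t) (m (lam0 - eps) t - m lam0 t)).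
 assert (Hr2 := Rmin_r (m lam0 t - m (lam0 + eps) t) (m (lam0 - eps) t - m lam0 t)).
 apply Rabs_def2 in Hr. destruct (m_ivt t (lam0 - eps) (lam0 + eps) r ltac:(lia) ltac:(lra) ltac:(lra)) as [lam [Hl El]].
 exists lam. split; auto. apply Rabs_le; lra. Qed.

Lemma Phi_derive lam0 t : (2 <= t)%nat -> is_derive (Phi t) (m lam0 t) lam0.
Proof. intros Ht. assert (Ht1 : (1 <= t)%nat) by lia. apply is_derive_Reals. intros eps He.
 destruct (near_sol lam0 t (eps / 2) Ht ltac:(lra)) as [delta [Hd Hs]].
 exists (mkposreal delta Hd). intros h Hh Hhd. simpl in Hhd.
 destruct (Hs (m lam0 t + h)) as [lam [Hl El]]. replace (m lam0 t + h - m lam0 t) with h by ring; auto.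
 rewrite <- El. rewrite !Phi_eq; auto.
 assert (A : lam * m lam t + ln (Z lam t) <= lam0 * m lam t + ln (Z lam0 t)).
 { rewrite <- gibbs_eq; auto. apply gibbs; auto. apply q_adm; auto. }
 assert (B : lam0 * m lam0 t + ln (Z lam0 t) <= lam * m lam0 t + ln (Z lam t)).
 { rewrite <- gibbs_eq; auto. apply gibbs; auto. apply q_adm; auto. }
 rewrite El in A |- *. apply Rabs_le_between in Hl.
 assert (Rabs ((lam * (m lam0 t + h) + ln (Z lam t) - (lam0 * m lam0 t + ln (Z lam0 t))) - lam0 * h) <= eps / 2 * Rabs h).
 { destruct (Rle_dec 0 h).
   - rewrite (Rabs_right h) by lra. apply Rabs_le. nra.
   - rewrite (Rabs_left h) by lra. apply Rabs_le. nra. }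
 replace ((lam * (m lam0 t + h) + ln (Z lam t) - (lam0 * m lam0 t + ln (Z lam0 t))) / h - lam0)
   with (((lam * (m lam0 t + h) + ln (Z lam t) - (lam0 * m lam0 t + ln (Z lam0 t))) - lam0 * h) / h) by (field; auto).
 unfold Rdiv. rewrite Rabs_mult, Rabs_inv. pose proof (Rabs_pos_lt h Hh).
 apply Rle_lt_trans with (eps / 2). apply Rmult_le_reg_r with (Rabs h); auto.
 rewrite Rmult_assoc, Rinv_l by lra. lra. lra. Qed.

Lemma loc_sol (g : R -> R) x lam0 t : (2 <= t)%nat -> continuous g x -> g x = m lam0 t ->
  locally x (fun y => exists lam, m lam t = g y).
Proof. intros Ht Hc E. destruct (near_sol lam0 t 1 Ht ltac:(lra)) as [delta [Hd Hs]].
 pose proof (proj1 (filterlim_locally g (g x)) Hc (mkposreal delta Hd)) as H. simpl in H.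
 eapply filter_imp; [|exact H]. intros y Hy. destruct (Hs (g y)) as [lam [_ El]].
 rewrite <- E. exact Hy. exists lam; auto. Qed.

Lemma loc_pos k : 0 < k -> locally k (fun y => 0 < y).
Proof. intros Hk. exists (mkposreal (k/2) ltac:(lra)). intros y Hy. simpl in Hy.
 unfold ball in Hy; simpl in Hy; unfold AbsRing_ball, abs, minus, plus, opp in Hy; simpl in Hy.
 apply Rabs_def2 in Hy. lra. Qed.

Lemma deriv_k n k t lam0 : (2 <= t)%nat -> 0 < k -> m lam0 t = n / k ->
  is_derive (fun k' => Lhat0 n k' t) k (-(n / k^2) * ln n - 1 / k + n / k^2 - lam0 * (n / k^2)).
Proof. intros Ht Hk E.
 assert (H1 : is_derive (fun k' => n / k' * ln n - ln k' - n / k' + 1) k (-(n / k^2) * ln n - 1 / k + n / k^2)).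
 { auto_derive. lra. field. lra. }
 assert (Hg : is_derive (fun k' => n / k') k (-(n / k^2))). { auto_derive. lra. field. lra. }
 pose proof (is_derive_comp (Phi t) (fun k' => n / k') k lam0 _ ltac:(cbv beta; rewrite <- E; apply Phi_derive; auto) Hg) as H2.
 pose proof (is_derive_plus _ _ _ _ _ H1 H2) as H3.
 replace (-(n / k^2) * ln n - 1 / k + n / k^2 - lam0 * (n / k^2)) with (plus (-(n / k^2) * ln n - 1 / k + n / k^2) (scal (-(n / k^2)) lam0)) by (unfold plus, scal; simpl; unfold mult; simpl; ring).
 eapply is_derive_ext_loc; [|exact H3]. simpl.
 assert (Hc : continuous (fun k' => n / k') k). { apply (ex_derive_continuous (K:=R_AbsRing) (V:=R_NormedModule)). eexists; exact Hg. }
 pose proof (loc_sol _ k lam0 t Ht Hc (eq_sym E)) as L1.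
 eapply filter_imp; [|exact (filter_and _ _ L1 (loc_pos k Hk))]. intros y [[lam El] Hy].
 unfold Lhat0. rewrite <- El. rewrite Ltilde0_Phi by lia. rewrite El.
 replace (n / y * y) with n by (field; lra). reflexivity. Qed.

Lemma deriv_n n k t lam0 : (2 <= t)%nat -> 0 < k -> 0 < n -> m lam0 t = n / k ->
  is_derive (fun n' => Lhat0 n' k t) n ((ln n + lam0) / k).
Proof. intros Ht Hk Hn E.
 assert (H1 : is_derive (fun n' => n' / k * ln n' - ln k - n' / k + 1) n (ln n / k)).
 { auto_derive. lra. field. lra. }
 assert (Hg : is_derive (fun n' => n' / k) n (/ k)). { auto_derive. auto. ring. }
 pose proof (is_derive_comp (Phi t) (fun n' => n' / k) n lam0 _ ltac:(cbv beta; rewrite <- E; apply Phi_derive; auto) Hg) as H2.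
 pose proof (is_derive_plus _ _ _ _ _ H1 H2) as H3.
 replace ((ln n + lam0) / k) with (plus (ln n / k) (scal (/ k) lam0)) by (unfold plus, scal; simpl; unfold mult; simpl; field; lra).
 eapply is_derive_ext_loc; [|exact H3]. simpl.
 assert (Hc : continuous (fun n' => n' / k) n). { apply (ex_derive_continuous (K:=R_AbsRing) (V:=R_NormedModule)). eexists; exact Hg. }
 pose proof (loc_sol _ n lam0 t Ht Hc (eq_sym E)) as L1.
 eapply filter_imp; [|exact L1]. intros y [lam El]. change R in y.
 unfold Lhat0. rewrite <- El. rewrite Ltilde0_Phi by lia. rewrite El.
 replace (y / k * k) with y by (field; lra). reflexivity. Qed.

Lemma Lhat0_val n k t lam0 : (1 <= t)%nat -> 0 < k -> m lam0 t = n / k ->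
  Lhat0 n k t = n / k * ln n - ln k - n / k + 1 + (lam0 * (n / k) + ln (Z lam0 t)).
Proof. intros Ht Hk E. unfold Lhat0. rewrite <- E, Ltilde0_eq by auto. rewrite E.
 replace (n / k * k) with n by (field; lra). ring. Qed.

Lemma deriv_K n k t lam0 : (2 <= t)%nat -> 0 < k -> m lam0 t = n / k ->
  is_derive (fun k' => L0 n k' t) k (ln (Z lam0 t) - ln k).
Proof. intros Ht Hk E. pose proof (deriv_k n k t lam0 Ht Hk E) as H1.
 pose proof (is_derive_mult (fun k' => k') _ k 1 _ (is_derive_id k) H1 Rmult_comm) as H2.
 unfold L0.
 replace (ln (Z lam0 t) - ln k) with (plus (mult 1 (Lhat0 n k t)) (mult k (-(n / k^2) * ln n - 1 / k + n / k^2 - lam0 * (n / k^2)))).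
 eapply is_derive_ext; [|exact H2]. intros; reflexivity.
 unfold plus, mult; simpl. rewrite (Lhat0_val n k t lam0) by (auto; lia). field. lra. Qed.

Lemma w_ratio lam i : w lam i = w lam (S i) * exp lam * (2 ^ i * INR (S i)).
Proof. unfold w. rewrite d_S. pose proof (d_pos i). rewrite S_INR.
 replace (- lam * (INR i + 1)) with (- lam * INR i + - lam) by ring. rewrite exp_plus.
 assert (exp (- lam) * exp lam = 1) by (rewrite <- exp_plus; replace (-lam + lam) with 0 by ring; apply exp_0).
 field_simplify; try (split; [|split]; try lra; try (apply pow_nonzero; lra); pose proof (pos_INR i); lra).
 replace (exp (- lam * INR i) * exp (- lam) * exp lam) with (exp (- lam * INR i) * (exp (- lam) * exp lam)) by ring.
 rewrite H0. field. all: lra. Qed.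

Definition lamof (s : R) (t : nat) : R := - ln (s * 2 ^ (t - 1) * INR t).

Lemma exp_lamof s t : 0 < s -> (1 <= t)%nat -> exp (lamof s t) = / (s * 2 ^ (t - 1) * INR t).
Proof. intros Hs Ht. unfold lamof. rewrite exp_Ropp, exp_ln; auto.
 apply Rmult_lt_0_compat. apply Rmult_lt_0_compat; auto. apply pow_lt; lra. apply lt_0_INR; lia. Qed.

Lemma pow2S_mono a b : (a <= b)%nat -> 2 ^ a * INR (S a) <= 2 ^ b * INR (S b).
Proof. intros H. apply Rmult_le_compat. apply pow_le; lra. apply pos_INR.
 apply Rle_pow; [lra|lia]. apply le_INR; lia. Qed.

Lemma ratio_up s t i : 0 < s -> (1 <= t)%nat -> (S i <= t)%nat ->
  w (lamof s t) i <= w (lamof s t) (S i) * / s.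
Proof. intros Hs Ht Hi. rewrite w_ratio, exp_lamof by auto. pose proof (w_pos (lamof s t) (S i)).
 pose proof (pow_lt 2 (t-1) ltac:(lra)). assert (0 < INR t) by (apply lt_0_INR; lia).
 pose proof (pow2S_mono i (t - 1) ltac:(lia)) as Hm. replace (S (t - 1)) with t in Hm by lia.
 assert (0 < 2 ^ (t - 1) * INR t) by (apply Rmult_lt_0_compat; [apply pow_lt; lra| apply lt_0_INR; lia]).
 rewrite Rmult_assoc. apply Rmult_le_compat_l; [lra|].
 replace (/ (s * 2 ^ (t - 1) * INR t) * (2 ^ i * INR (S i))) with (/ s * ((2 ^ i * INR (S i)) / (2 ^ (t - 1) * INR t))) by (field; repeat split; lra).
 rewrite <- (Rmult_1_r (/ s)) at 2. apply Rmult_le_compat_l. left; apply Rinv_0_lt_compat; auto.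
 apply Rmult_le_reg_r with (2 ^ (t - 1) * INR t); auto. unfold Rdiv. rewrite Rmult_assoc, Rinv_l; lra. Qed.

Lemma ratio_low s t i M : 0 < s -> (2 * M <= t)%nat -> (t - M <= i)%nat -> (S i <= t)%nat ->
  w (lamof s t) (S i) <= w (lamof s t) i * (2 ^ M * s).
Proof. intros Hs Ht Hi1 Hi. assert (Ht1 : (1 <= t)%nat) by lia. rewrite (w_ratio _ i), exp_lamof by auto.
 pose proof (pow_lt 2 (t-1) ltac:(lra)). assert (0 < INR t) by (apply lt_0_INR; lia).
 pose proof (w_pos (lamof s t) (S i)).
 assert (0 < 2 ^ (t - 1) * INR t) by (apply Rmult_lt_0_compat; [apply pow_lt; lra| apply lt_0_INR; lia]).
 assert (2 ^ (t - 1) * INR t <= 2 ^ M * (2 ^ i * INR (S i))).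
 { replace (2 ^ (t-1)) with (2 ^ (t - M) * 2 ^ (M - 1)) by (rewrite <- pow_add; f_equal; lia).
   assert (Hp1 : 2 ^ (t - M) <= 2 ^ i) by (apply Rle_pow; [lra|lia]).
   assert (Hp2 : 2 ^ M = 2 * 2 ^ (M - 1)). { destruct M. lia. simpl. replace (M - 0)%nat with M by lia. auto. }
   rewrite Hp2. assert (Hp3 : INR t <= 2 * INR (S i)). { replace 2 with (INR 2) by (simpl; lra). rewrite <- mult_INR. apply le_INR. lia. }
   pose proof (pow_lt 2 (M - 1) ltac:(lra)). pose proof (pow_lt 2 (t - M) ltac:(lra)). assert (Hq : 2 ^ (t - M) * INR t <= 2 ^ i * (2 * INR (S i))) by (apply Rmult_le_compat; lra). nra. }
 replace (w (lamof s t) (S i) * / (s * 2 ^ (t - 1) * INR t) * (2 ^ i * INR (S i)) * (2 ^ M * s))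
  with (w (lamof s t) (S i) * ((2 ^ M * (2 ^ i * INR (S i))) / (2 ^ (t - 1) * INR t))) by (field; repeat split; lra).
 rewrite <- (Rmult_1_r (w _ (S i))) at 1. apply Rmult_le_compat_l; [lra|].
 apply Rmult_le_reg_r with (2 ^ (t - 1) * INR t); auto. unfold Rdiv. rewrite Rmult_assoc, Rinv_l; lra. Qed.

Lemma desc_up (f : nat -> R) t a : 0 <= a -> (forall i, (S i <= t)%nat -> f i <= f (S i) * a) ->
  forall j, (j <= t)%nat -> f (t - j)%nat <= f t * a ^ j.
Proof. intros Ha H. induction j; intros Hj. rewrite Nat.sub_0_r; simpl; lra.
 pose proof (H (t - S j)%nat ltac:(lia)). replace (S (t - S j)) with (t - j)%nat in H0 by lia.
 pose proof (IHj ltac:(lia)). simpl. apply Rle_trans with (f (t - j)%nat * a). auto.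
 replace (f t * (a * a ^ j)) with (f t * a ^ j * a) by ring. apply Rmult_le_compat_r; auto. Qed.

Lemma desc_low (f : nat -> R) t a J : 0 <= a -> (forall i, (t - J <= i)%nat -> (S i <= t)%nat -> f (S i) <= f i * a) ->
  forall j, (j <= J)%nat -> (j <= t)%nat -> f t <= f (t - j)%nat * a ^ j.
Proof. intros Ha H. induction j; intros Hj Hjt. rewrite Nat.sub_0_r; simpl; lra.
 pose proof (H (t - S j)%nat ltac:(lia) ltac:(lia)). replace (S (t - S j)) with (t - j)%nat in H0 by lia.
 pose proof (IHj ltac:(lia) ltac:(lia)). simpl. apply Rle_trans with (f (t - j)%nat * a ^ j). auto.
 replace (f (t - S j)%nat * (a * a ^ j)) with (f (t - S j)%nat * a * a ^ j) by ring.
 apply Rmult_le_compat_r; auto. apply pow_le; auto. Qed.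

Lemma gap_up s t : 4 <= s -> (2 <= t)%nat -> INR t - m (lamof s t) t <= 2 / s.
Proof. intros Hs Ht. set (lam := lamof s t). set (f := fun l => (INR t - INR l) * w lam l).
 assert (Hr : forall i, (S i <= t)%nat -> w lam i <= w lam (S i) * / s) by (intros; unfold lam; apply ratio_up; [lra|lia|lia]).
 assert (P : forall i, (1 <= i)%nat -> (i + 1 <= t)%nat -> sum1 f i <= 2 * (INR t - INR i) * w lam i).
 { induction i as [|i IH]; intros H1 H2. lia. destruct i as [|i].
   - simpl. unfold f. pose proof (w_pos lam 1). assert (INR 1 <= INR t) by (apply le_INR; lia). change (INR 1) with 1 in *. nra.
   - simpl sum1 in *. pose proof (IH ltac:(lia) ltac:(lia)).
     pose proof (Hr (S i) ltac:(lia)). pose proof (w_pos lam (S (S i))). pose proof (w_pos lam (S i)).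
     unfold f in H |- *. assert (INR (S i) + 2 <= INR t) by (replace 2 with (INR 2) by (simpl; lra); rewrite <- plus_INR; apply le_INR; lia).
     rewrite !S_INR in *. set (x := INR i) in *. set (T := INR t) in *.
     assert (w lam (S i) <= w lam (S (S i)) / 4).
     { apply Rle_trans with (w lam (S (S i)) * / s); auto. unfold Rdiv. apply Rmult_le_compat_l. lra.
       apply Rinv_le_contravar; lra. }
     nra. }
 assert (Pt : sum1 f t <= 2 / s * w lam t).
 { destruct t as [|t']. lia. simpl sum1. unfold f at 2. rewrite Rminus_diag, Rmult_0_l, Rplus_0_r.
   pose proof (P t' ltac:(lia) ltac:(lia)). pose proof (Hr t' ltac:(lia)).
   rewrite S_INR in H. pose proof (w_pos lam t'). 
   apply Rle_trans with (2 * w lam t'). lra. unfold Rdiv. nra. }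
 assert (E : INR t - m lam t = sum1 f t / Z lam t).
 { unfold m, S1, f. pose proof (Z_pos lam t ltac:(lia)).
   rewrite (sum1_ext (fun l => (INR t - INR l) * w lam l) (fun l => INR t * w lam l - INR l * w lam l)) by (intros; ring).
   rewrite sum1_minus, sum1_scal. fold (Z lam t). field. lra. }
 rewrite E. pose proof (Z_pos lam t ltac:(lia)). pose proof (w_pos lam t).
 assert (w lam t <= Z lam t) by (apply sum1_ge_term; [lia| intros; left; apply w_pos]).
 apply Rle_trans with (2 / s * w lam t / Z lam t). apply Rmult_le_compat_r; [left; apply Rinv_0_lt_compat; lra | auto].
 assert (0 < 2 / s) by (apply Rdiv_lt_0_compat; lra).
 assert (Hq: w lam t / Z lam t <= 1). { unfold Rdiv. apply Rmult_le_reg_r with (Z lam t); auto. rewrite Rmult_assoc, Rinv_l by lra. lra. }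
 replace (2 / s * w lam t / Z lam t) with (2 / s * (w lam t / Z lam t)) by (unfold Rdiv; ring). nra. Qed.

Lemma tm_eq lam t c : (1 <= t)%nat ->
  INR t - m lam t - c = sum1 (fun l => (INR t - INR l - c) * w lam l) t / Z lam t.
Proof. intros Ht. unfold m, S1. pose proof (Z_pos lam t Ht).
 rewrite (sum1_ext (fun l => (INR t - INR l - c) * w lam l) (fun l => (INR t - c) * w lam l - INR l * w lam l)) by (intros; ring).
 rewrite sum1_minus, sum1_scal. fold (Z lam t). field. lra. Qed.

Lemma gap_low s t M c2 : 0 < c2 -> c2 < INR M -> (1 <= M)%nat -> (2 * M <= t)%nat -> 0 < s <= 1 ->
  INR M * c2 * ((2 ^ M) ^ M * s) < INR M - c2 -> c2 < INR t - m (lamof s t) t.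
Proof. intros Hc HM HM1 Ht Hs Hcond. set (lam := lamof s t). set (f := fun l => (INR t - INR l - c2) * w lam l).
 assert (Ht1 : (1 <= t)%nat) by lia.
 assert (Hup : forall j, (j <= t)%nat -> w lam (t - j)%nat <= w lam t * (/ s) ^ j).
 { apply desc_up. left; apply Rinv_0_lt_compat; lra. intros i Hi. unfold lam. apply ratio_up; auto; lra. }
 assert (Hlow : forall j, (j <= M)%nat -> (j <= t)%nat -> w lam t <= w lam (t - j)%nat * (2 ^ M * s) ^ j).
 { apply desc_low. pose proof (pow_lt 2 M ltac:(lra)); nra. intros i Hi1 Hi2. unfold lam. apply ratio_low; auto; lra. }
 set (A := (2 ^ M * s) ^ M). set (B := (/ s) ^ (M - 1)%nat).
 assert (HA : 0 < A) by (unfold A; apply pow_lt; pose proof (pow_lt 2 M ltac:(lra)); nra).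
 assert (HB : 1 <= B) by (unfold B; apply pow_R1_Rle; rewrite <- Rinv_1; apply Rinv_le_contravar; lra).
 assert (HAB : A * B = (2 ^ M) ^ M * s).
 { unfold A, B. rewrite Rpow_mult_distr.
   assert (Es: s ^ M = s * s ^ (M-1)) by (destruct M; [lia|simpl; rewrite Nat.sub_0_r; auto]).
   rewrite Es, pow_inv. field. apply pow_nonzero; lra. }
 pose proof (w_pos lam t) as Hwt.
 assert (L1 : (INR M - c2) * w lam (t - M)%nat <= sum1 f (t - M)).
 { replace ((INR M - c2) * w lam (t - M)%nat) with (f (t - M)%nat).
   apply sum1_ge_term. lia. intros i Hi. unfold f. pose proof (w_pos lam i).
   assert (INR i + INR M <= INR t) by (rewrite <- plus_INR; apply le_INR; lia). nra.
   unfold f. rewrite minus_INR by lia. ring. }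
 assert (L2 : INR M * (- c2 * (w lam t * B)) <= sum1 (fun j => f (t - M + j)%nat) M).
 { rewrite <- sum1_const. apply sum1_le. intros j Hj. unfold f.
   pose proof (Hup (M - j)%nat ltac:(lia)). replace (t - (M - j))%nat with (t - M + j)%nat in H by lia.
   assert ((/ s) ^ (M - j) <= B). { unfold B. apply Rle_pow. rewrite <- Rinv_1; apply Rinv_le_contravar; lra. lia. }
   pose proof (w_pos lam (t - M + j)%nat).
   assert (INR (t - M + j) <= INR t) by (apply le_INR; lia).
   assert (w lam (t - M + j)%nat <= w lam t * B) by (apply Rle_trans with (w lam t * (/ s) ^ (M - j)); auto; apply Rmult_le_compat_l; lra).
   nra. }
 pose proof (Hlow M ltac:(lia) ltac:(lia)) as L3. fold A in L3.
 assert (Hsum : 0 < sum1 f t).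
 { assert (Et: sum1 f t = sum1 f (t - M + M)) by (f_equal; lia). rewrite Et, sum1_split.
   assert (INR M * c2 * (A * B) < INR M - c2) by (rewrite HAB; auto).
   assert (0 < INR M) by lra.
   assert ((INR M - c2) * w lam t <= (INR M - c2) * (w lam (t - M)%nat * A)) by (apply Rmult_le_compat_l; lra).
   assert (INR M * c2 * (A * B) * w lam t < (INR M - c2) * w lam t) by (apply Rmult_lt_compat_r; auto).
   assert (INR M * c2 * B * w lam t < (INR M - c2) * w lam (t - M)%nat).
   { apply Rmult_lt_reg_r with A; auto. nra. }
   nra. }
 pose proof (tm_eq lam t c2 Ht1). fold f in H. pose proof (Z_pos lam t Ht1).
 assert (0 < sum1 f t / Z lam t) by (apply Rdiv_lt_0_compat; auto). lra. Qed.

Lemma Z_upper s t sig : 0 < sig -> sig <= 1 -> sig <= s -> (1 <= t)%nat ->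
  w (lamof s t) t <= Z (lamof s t) t <= INR t * ((/ sig) ^ t * w (lamof s t) t).
Proof. intros H0 H1 H2 Ht. set (lam := lamof s t). split.
 - apply sum1_ge_term. lia. intros; left; apply w_pos.
 - apply sum1_ub. intros i Hi.
   assert (Hup : forall j, (j <= t)%nat -> w lam (t - j)%nat <= w lam t * (/ sig) ^ j).
   { apply desc_up. left; apply Rinv_0_lt_compat; lra. intros i0 Hi0. apply Rle_trans with (w lam (S i0) * / s).
     unfold lam; apply ratio_up; auto; lra. apply Rmult_le_compat_l. left; apply w_pos.
     apply Rinv_le_contravar; lra. }
   pose proof (Hup (t - i)%nat ltac:(lia)). replace (t - (t - i))%nat with i in H by lia.
   assert ((/ sig) ^ (t - i) <= (/ sig) ^ t). { apply Rle_pow. rewrite <- Rinv_1; apply Rinv_le_contravar; lra. lia. }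
   pose proof (w_pos lam t). nra. Qed.

Lemma ln_w_t lam t : ln (w lam t) = - lam * INR t - ln (d t).
Proof. unfold w. rewrite ln_div, ln_exp. ring. apply exp_pos. apply d_pos. Qed.

Lemma lamof_eq s t : 0 < s -> (1 <= t)%nat -> lamof s t = - ln s - (INR t - 1) * ln 2 - ln (INR t).
Proof. intros Hs Ht. unfold lamof. pose proof (pow_lt 2 (t-1) ltac:(lra)). assert (0 < INR t) by (apply lt_0_INR; lia).
 rewrite ln_mult, ln_mult, ln_pow, minus_INR; auto; try lra. simpl INR at 2. ring. apply Rmult_lt_0_compat; auto. Qed.

Lemma ln2_bounds : 1/2 < ln 2 < 1.
Proof. split.
 - assert (exp (1/2) < 2).
   { assert (exp (1/2) * exp (1/2) = exp 1) by (rewrite <- exp_plus; f_equal; lra).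
     pose proof exp_le_3. pose proof (exp_pos (1/2)).
     destruct (Rlt_or_le (exp (1/2)) 2) as [Hl|Hl]; auto.
     assert (2 * 2 <= exp (1/2) * exp (1/2)) by (apply Rmult_le_compat; lra). lra. }
   rewrite <- (ln_exp (1/2)). apply ln_increasing. apply exp_pos. auto.
 - rewrite <- ln_exp with 1. apply ln_increasing. lra. pose proof (exp_ineq1 1 ltac:(lra)). lra. Qed.

Lemma ln_le_lin x a : 0 < x -> 0 < a -> ln x <= x / a - 1 + ln a.
Proof. intros Hx Ha. assert (0 < x / a) by (apply Rdiv_lt_0_compat; auto).
 pose proof (exp_ineq1_le (ln (x / a))). rewrite exp_ln in H0 by auto.
 rewrite ln_div in H0 by auto. lra. Qed.

Lemma ln_small_const : ln 16 < 4 /\ ln 5 < 4 /\ ln 3 < 4.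
Proof. pose proof ln2_bounds. assert (ln 16 = 4 * ln 2).
 { replace 16 with (2^4) by (simpl; lra). rewrite ln_pow by lra. simpl; ring. }
 assert (ln 5 < ln 16) by (apply ln_increasing; lra). assert (ln 3 < ln 16) by (apply ln_increasing; lra). lra. Qed.

Section Asym.
Set Default Proof Using "All".
Variables (l2 L lnL LL t rho C c1 c2 B0 Mr : R).
Hypothesis h2 : 1/2 < l2 < 1.
Hypothesis hc : 0 < c1 <= c2.
Hypothesis hC : 0 <= C.
Hypothesis hB : 0 <= B0.
Hypothesis hM : 0 <= Mr.
Hypothesis hL : 100 + 10 * (C + B0 + c2 + Mr) <= L.
Hypothesis hlnL : 1 <= lnL <= L / 16 + 3.
Hypothesis hLL : lnL - 1 <= LL <= lnL + 1.
Hypothesis ht : Rabs (t - (2 * L / l2 - 2 * LL / l2 + 2 * (1 - l2) / l2 + 1)) <= C.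
Hypothesis hrho : c1 <= t - rho <= c2.
Hypothesis ht0 : 0 <= t.

Lemma y_bounds : - C <= t * l2 - (2 * L - 2 * LL + 2 - l2) <= C.
Proof. set (dd := t - (2 * L / l2 - 2 * LL / l2 + 2 * (1 - l2) / l2 + 1)) in *.
 replace (t * l2 - (2 * L - 2 * LL + 2 - l2)) with (dd * l2) by (unfold dd; field; lra).
 apply Rabs_le_between. rewrite Rabs_mult, (Rabs_right l2) by lra.
 apply Rle_trans with (Rabs dd * 1). apply Rmult_le_compat_l. apply Rabs_pos. lra. lra. Qed.

Lemma t_bounds : L + c2 + 2 * Mr + 2 <= t /\ t <= 5 * L - 1 /\ L <= rho /\ rho <= 5 * L.
Proof. pose proof y_bounds.
 assert (Hy1 : 3/2 * L <= t * l2) by lra.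
 assert (Hy2 : t * l2 <= 2 * L + 4 + C) by lra.
 assert (t * l2 <= t * 1) by (apply Rmult_le_compat_l; lra).
 assert (Htp : 0 < t). { destruct (Req_dec t 0) as [E|E]. rewrite E in Hy1. lra. lra. }
 assert (t * (1/2) < t * l2) by (apply Rmult_lt_compat_l; lra). lra. Qed.

Variables (u ell : R).
Hypothesis hu : 0 <= u <= 4 + lnL.
Hypothesis hell : Rabs ell <= B0.

Lemma X_bounds : L / 2 <= t * l2 - l2 + u - ell + 1 - L <= 2 * L.
Proof. pose proof y_bounds. apply Rabs_le_between in hell. lra. Qed.

Lemma dk_bounds : 1/4 * L ^ 3 <= rho * (rho * (t * l2 - l2 + u - ell + 1 - L) - 1) <= 50 * L ^ 3.
Proof. pose proof X_bounds. pose proof t_bounds. set (X := t * l2 - l2 + u - ell + 1 - L) in *.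
 assert (HL2 : 100 * L <= L * L) by (apply Rmult_le_compat_r; lra).
 assert (H1 : L * (L / 2) <= rho * X) by (apply Rmult_le_compat; lra).
 assert (H2 : rho * X <= 5 * L * (2 * L)) by (apply Rmult_le_compat; lra).
 assert (H3 : L * (L * L / 4) <= rho * (rho * X - 1)) by (apply Rmult_le_compat; lra).
 assert (H4 : rho * (rho * X - 1) <= 5 * L * (10 * L * L)) by (apply Rmult_le_compat; lra).
 simpl. split; lra. Qed.

Lemma dn_bounds : 1/4 * L ^ 2 <= rho * (t * l2 - l2 + u - ell + 1 - L - 1) <= 10 * L ^ 2.
Proof. pose proof X_bounds. pose proof t_bounds. set (X := t * l2 - l2 + u - ell + 1 - L) in *.
 assert (H1 : L * (L / 4) <= rho * (X - 1)) by (apply Rmult_le_compat; lra).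
 assert (H2 : rho * (X - 1) <= 5 * L * (2 * L)) by (apply Rmult_le_compat; lra).
 simpl. split; lra. Qed.

Variables (F r lnrho lnX1 : R).
Hypothesis hF : 0 <= F <= t * u.
Hypothesis hX1 : 0 <= lnX1.
Hypothesis hr : 0 <= r <= u + t * lnX1.
Hypothesis hlr : 0 <= lnrho <= 4 + lnL.

Lemma dK_bound : Rabs (t * (t - 1) / 2 * l2 + t * u - t * ell - F + r - L + lnrho - 2 / l2 * L ^ 2)
  <= ((6 + C) * (10 + C) + (8 + C) + 70 + 5 * B0 + 5 * lnX1) * L * lnL.
Proof. pose proof y_bounds as Hy. pose proof t_bounds as Ht. apply Rabs_le_between in hell.
 assert (HL1 : 1 <= L) by lra.
 assert (HC1 : C * 1 <= C * lnL) by (apply Rmult_le_compat_l; lra).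
 assert (HC2 : C * 1 <= C * L) by (apply Rmult_le_compat_l; lra).
 assert (HLl : L * 1 <= L * lnL) by (apply Rmult_le_compat_l; lra).
 assert (Hll : lnL * 1 <= L * lnL) by (rewrite Rmult_comm; apply Rmult_le_compat_r; lra).
 set (y := t * l2) in *. set (g := y - 2 * L).
 assert (Hg : Rabs g <= (6 + C) * lnL) by (apply Rabs_le; unfold g; lra).
 assert (Hg2 : Rabs (y + 2 * L) <= (10 + C) * L) by (apply Rabs_le; lra).
 assert (E1 : t * (t - 1) / 2 * l2 - 2 / l2 * L ^ 2 = g * (y + 2 * L) / (2 * l2) - y / 2).
 { unfold g, y. field. lra. }
 assert (P1 : Rabs (g * (y + 2 * L) / (2 * l2)) <= (6 + C) * (10 + C) * (L * lnL)).
 { unfold Rdiv. rewrite !Rabs_mult. rewrite (Rabs_right (/ (2 * l2))) by (apply Rle_ge; left; apply Rinv_0_lt_compat; lra).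
   assert (Hi1 : / (2 * l2) <= 1) by (rewrite <- Rinv_1; apply Rinv_le_contravar; lra).
   assert (Hi0 : 0 < / (2 * l2)) by (apply Rinv_0_lt_compat; lra).
   pose proof (Rabs_pos g). pose proof (Rabs_pos (y + 2 * L)).
   assert (Q1 : Rabs g * Rabs (y + 2 * L) <= (6 + C) * lnL * ((10 + C) * L)) by (apply Rmult_le_compat; auto).
   assert (Q2 : Rabs g * Rabs (y + 2 * L) * / (2 * l2) <= Rabs g * Rabs (y + 2 * L) * 1)
     by (apply Rmult_le_compat_l; auto; apply Rmult_le_pos; auto).
   replace ((6 + C) * lnL * ((10 + C) * L)) with ((6 + C) * (10 + C) * (L * lnL)) in Q1 by ring. lra. }
 assert (P2 : Rabs (y / 2) <= (8 + C) * (L * lnL)).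
 { apply Rabs_le. assert (Q : (8 + C) * L <= (8 + C) * (L * lnL)) by (apply Rmult_le_compat_l; lra). lra. }
 assert (P3 : t * u <= 25 * (L * lnL)).
 { assert (Q : t * u <= 5 * L * (4 + lnL)) by (apply Rmult_le_compat; lra). lra. }
 assert (P4 : Rabs (t * ell) <= 5 * B0 * (L * lnL)).
 { rewrite Rabs_mult, (Rabs_right t) by lra. assert (Q : t * Rabs ell <= 5 * L * B0) by (apply Rmult_le_compat; try lra; first [apply Rabs_pos | apply Rabs_le; lra]).
   assert (Q' : B0 * L <= B0 * (L * lnL)) by (apply Rmult_le_compat_l; lra). lra. }
 assert (P5 : r <= (5 + 5 * lnX1) * (L * lnL)).
 { assert (Q1 : t * lnX1 <= 5 * L * lnX1) by (apply Rmult_le_compat_r; lra).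
   assert (Q2 : lnX1 * L <= lnX1 * (L * lnL)) by (apply Rmult_le_compat_l; lra). lra. }
 assert (P6 : L + lnrho <= 6 * (L * lnL)) by lra.
 apply Rabs_le_between in P1. apply Rabs_le_between in P2. apply Rabs_le_between in P4.
 replace (t * (t - 1) / 2 * l2 + t * u - t * ell - F + r - L + lnrho - 2 / l2 * L ^ 2)
   with ((t * (t - 1) / 2 * l2 - 2 / l2 * L ^ 2) + t * u - t * ell - F + r - L + lnrho) by ring.
 rewrite E1. apply Rabs_le. split; lra. Qed.
End Asym.

Lemma exists_M c2 : 0 < c2 -> exists M : nat, (1 <= M)%nat /\ c2 < INR M.
Proof. intros Hc. destruct (archimed c2) as [H1 _]. assert (0 < up c2)%Z by (apply lt_IZR; lra).
 exists (Z.to_nat (up c2)). rewrite INR_IZR_INZ, Z2Nat.id by lia. split; [lia|lra]. Qed.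

Lemma exists_N x : exists N : nat, x <= INR N.
Proof. destruct (archimed x) as [H1 _]. destruct (Z_le_gt_dec 0 (up x)).
 exists (Z.to_nat (up x)). rewrite INR_IZR_INZ, Z2Nat.id by lia. lra.
 exists 0%nat. simpl. assert (up x <= -1)%Z by lia. apply IZR_le in H. lra. Qed.

Theorem corollary40 (t : nat -> nat) (C c1 c2 : R) (Nt : nat) :
  (forall n : nat, (Nt <= n)%nat -> Rabs (INR (t n) - alpha0 (INR n)) <= C) ->
  0 < c1 -> c1 <= c2 ->
  exists (a1 a2 b1 b2 D : R) (N0 : nat),
    0 < a1 /\ 0 < a2 /\ 0 < b1 /\ 0 < b2 /\ 0 <= D /\
    forall (n : nat) (k : R),
      (N0 <= n)%nat -> 0 < k -> k <= INR n / 2 ->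
      c1 <= INR (t n) - INR n / k <= c2 ->
      (exists dk : R,
          is_derive (fun k' => Lhat0 (INR n) k' (t n)) k dk /\
          a1 * ln (INR n) ^ 3 / INR n <= dk <= a2 * ln (INR n) ^ 3 / INR n) /\
      (exists dn : R,
          is_derive (fun n' => Lhat0 n' k (t n)) (INR n) dn /\
          - (b2 * ln (INR n) ^ 2 / INR n) <= dn <= - (b1 * ln (INR n) ^ 2 / INR n)) /\
      (exists dK : R,
          is_derive (fun k' => L0 (INR n) k' (t n)) k dK /\
          Rabs (dK - 2 / ln 2 * ln (INR n) ^ 2) <= D * ln (INR n) * ln (ln (INR n))).
Proof.
 intros Ht Hc1 Hc12.
 assert (hC : 0 <= C) by (pose proof (Ht Nt (le_n _)); pose proof (Rabs_pos (INR (t Nt) - alpha0 (INR Nt))); lra).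
 destruct (exists_M c2 ltac:(lra)) as [M [HM1 HM2]].
 pose proof ln2_bounds as h2.
 set (sig2 := Rmax 4 (4 / c1)).
 assert (Hs2a : 4 <= sig2) by apply Rmax_l. assert (Hs2b : 4 / c1 <= sig2) by apply Rmax_r.
 assert (HPM : 0 < (2 ^ M) ^ M) by (apply pow_lt; apply pow_lt; lra).
 assert (HMc : 0 < INR M * c2) by (apply Rmult_lt_0_compat; lra).
 set (sig1 := Rmin (1/2) ((INR M - c2) / (2 * (INR M * c2 * (2 ^ M) ^ M)))).
 assert (Hs1a : sig1 <= 1/2) by apply Rmin_l.
 assert (Hs1b : sig1 <= (INR M - c2) / (2 * (INR M * c2 * (2 ^ M) ^ M))) by apply Rmin_r.
 assert (Hs1p : 0 < sig1). { apply Rmin_pos. lra. apply Rdiv_lt_0_compat. lra. nra. }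
 set (B0 := Rabs (ln sig1) + Rabs (ln sig2)).
 assert (hB : 0 <= B0) by (pose proof (Rabs_pos (ln sig1)); pose proof (Rabs_pos (ln sig2)); unfold B0; lra).
 set (lnX1 := - ln sig1).
 assert (hX1 : 0 <= lnX1). { unfold lnX1. assert (ln sig1 < ln 1) by (apply ln_increasing; lra). rewrite ln_1 in H. lra. }
 set (Lam := 100 + 10 * (C + B0 + c2 + INR M)).
 destruct (exists_N (exp Lam)) as [N1 HN1].
 exists (1/4), 50, (1/4), 10, ((6 + C) * (10 + C) + (8 + C) + 70 + 5 * B0 + 5 * lnX1), (Nat.max Nt N1).
 split; [lra|]. split; [lra|]. split; [lra|]. split; [lra|]. split. { nra. }
 intros n k Hn Hk Hkn Hrho.
 set (tn := t n) in *. set (nR := INR n) in *.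
 assert (HnR : exp Lam <= nR). { apply Rle_trans with (INR N1); auto. apply le_INR; lia. }
 assert (HnRp : 0 < nR) by (pose proof (exp_pos Lam); lra).
 set (L := ln nR).
 assert (hL : Lam <= L). { unfold L. rewrite <- (ln_exp Lam). apply ln_le; auto. apply exp_pos. }
 set (lnL := ln L). set (LL := ln (L / ln 2)).
 assert (hlnL : 1 <= lnL <= L / 16 + 3).
 { split. unfold lnL. rewrite <- (ln_exp 1). apply ln_le. apply exp_pos. pose proof exp_le_3. unfold Lam in hL. lra.
   pose proof (ln_le_lin L 16 ltac:(unfold Lam in hL; lra) ltac:(lra)). pose proof ln_small_const. unfold lnL. lra. }
 assert (hLL : lnL - 1 <= LL <= lnL + 1).
 { unfold LL, lnL. rewrite ln_div by (unfold Lam in hL; lra). 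
   assert (ln (ln 2) < 0). { rewrite <- ln_1. apply ln_increasing; lra. }
   assert (-1 < ln (ln 2)). { rewrite <- (ln_exp (-1)). apply ln_increasing. apply exp_pos.
     assert (exp (-1) * exp 1 = 1) by (rewrite <- exp_plus; replace (-1 + 1) with 0 by ring; apply exp_0).
     pose proof (exp_ineq1 1 ltac:(lra)). pose proof (exp_pos (-1)). nra. }
   lra. }
 set (tR := INR tn).
 assert (ht : Rabs (tR - (2 * L / ln 2 - 2 * LL / ln 2 + 2 * (1 - ln 2) / ln 2 + 1)) <= C).
 { replace (2 * L / ln 2 - 2 * LL / ln 2 + 2 * (1 - ln 2) / ln 2 + 1) with (alpha0 nR).
   apply Ht. lia. unfold alpha0, log2. rewrite (ln_div (exp 1) 2), ln_exp by (try apply exp_pos; lra). fold L. fold LL.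
   field. lra. }
 set (rho := nR / k) in *.
 assert (hrho : c1 <= tR - rho <= c2) by auto.
 assert (ht0 : 0 <= tR) by apply pos_INR.
 assert (hc : 0 < c1 <= c2) by lra.
 assert (hM : 0 <= INR M) by apply pos_INR.
 pose proof (t_bounds (ln 2) L lnL LL tR rho C c1 c2 B0 (INR M) h2 hc hC hB hM hL hlnL hLL ht hrho ht0) as TB.
 assert (HtM : (2 * M <= tn)%nat). { apply INR_le. rewrite mult_INR. simpl (INR 2). lra. }
 assert (Ht2 : (2 <= tn)%nat). { apply INR_le. simpl (INR 2). lra. }
 assert (Ht1 : (1 <= tn)%nat) by lia.
 pose proof (gap_up sig2 tn Hs2a Ht2) as G2.
 assert (2 / sig2 <= c1 / 2). { apply Rmult_le_reg_r with sig2. lra. unfold Rdiv. rewrite Rmult_assoc, Rinv_l by lra.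
   apply Rmult_le_compat_l with (r := c1) in Hs2b; [|lra]. unfold Rdiv in Hs2b. field_simplify in Hs2b; lra. }
 assert (G1 : c2 < INR tn - m (lamof sig1 tn) tn).
 { apply gap_low with M; auto; try lra.
   assert (INR M * c2 * ((2 ^ M) ^ M * sig1) <= INR M * c2 * ((2 ^ M) ^ M * ((INR M - c2) / (2 * (INR M * c2 * (2 ^ M) ^ M))))).
   { apply Rmult_le_compat_l. lra. apply Rmult_le_compat_l; lra. }
   replace (INR M * c2 * ((2 ^ M) ^ M * ((INR M - c2) / (2 * (INR M * c2 * (2 ^ M) ^ M))))) with ((INR M - c2) / 2) in H0
     by (field; lra). lra. }
 assert (Hlam : lamof sig2 tn < lamof sig1 tn).
 { rewrite !lamof_eq by (auto; lra). assert (ln sig1 < ln sig2) by (apply ln_increasing; lra). lra. }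
 destruct (m_ivt tn (lamof sig2 tn) (lamof sig1 tn) rho Ht1 Hlam) as [lam0 [Hl0 Em]].
 { fold tR in G1, G2. lra. }
 set (u := ln tR).
 assert (hu : 0 <= u <= 4 + lnL).
 { split. unfold u. rewrite <- ln_1. apply ln_le. lra. assert (INR 1 <= tR) by (apply le_INR; lia). simpl in H0; lra.
   unfold u. apply Rle_trans with (ln (5 * L)). apply ln_le. lra. lra.
   rewrite ln_mult by lra. pose proof ln_small_const. unfold lnL; lra. }
 set (ell := lam0 + (tR - 1) * ln 2 + u).
 assert (hell : Rabs ell <= B0).
 { rewrite !lamof_eq in Hl0 by (auto; lra). fold tR u in Hl0. unfold ell, B0.
   pose proof (Rabs_pos (ln sig1)). pose proof (Rabs_pos (ln sig2)).
   pose proof (proj1 (Rabs_le_between (ln sig1) (Rabs (ln sig1))) (Rle_refl _)).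
   pose proof (proj1 (Rabs_le_between (ln sig2) (Rabs (ln sig2))) (Rle_refl _)).
   apply Rabs_le. lra. }
 assert (HX : - L + 1 - lam0 = tR * ln 2 - ln 2 + u - ell + 1 - L) by (unfold ell; ring).
 split; [|split].
 -
   eexists. split. apply (deriv_k nR k tn lam0); auto.
   pose proof (dk_bounds (ln 2) L lnL LL tR rho C c1 c2 B0 (INR M) h2 hc hC hB hM hL hlnL hLL ht hrho ht0 u ell hu hell) as DB.
   fold L. replace (- (nR / k ^ 2) * L - 1 / k + nR / k ^ 2 - lam0 * (nR / k ^ 2))
     with (rho * (rho * (tR * ln 2 - ln 2 + u - ell + 1 - L) - 1) / nR).
   2:{ rewrite <- HX. unfold rho. field. lra. }
   split; unfold Rdiv; apply Rmult_le_compat_r; try (left; apply Rinv_0_lt_compat; lra); lra.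
 -
   eexists. split. apply (deriv_n nR k tn lam0); auto.
   pose proof (dn_bounds (ln 2) L lnL LL tR rho C c1 c2 B0 (INR M) h2 hc hC hB hM hL hlnL hLL ht hrho ht0 u ell hu hell) as DB.
   fold L. replace ((L + lam0) / k) with (- (rho * (tR * ln 2 - ln 2 + u - ell + 1 - L - 1)) / nR).
   2:{ replace (tR * ln 2 - ln 2 + u - ell + 1 - L - 1) with (- L + 1 - lam0 - 1) by lra. unfold rho. field. lra. }
   assert (0 < / nR) by (apply Rinv_0_lt_compat; lra).
   split; unfold Rdiv; rewrite <- !Ropp_mult_distr_l; apply Ropp_le_contravar; apply Rmult_le_compat_r; lra.
 -
   eexists. split. apply (deriv_K nR k tn lam0); auto.
   set (s0 := exp (- ell)).
   assert (Hs0 : lamof s0 tn = lam0). { rewrite lamof_eq; auto. unfold s0. rewrite ln_exp. fold tR u. unfold ell. ring. apply exp_pos. }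
   assert (Hsig : sig1 <= s0).
   { rewrite !lamof_eq in Hl0 by (auto; lra). fold tR u in Hl0. unfold s0. rewrite <- (exp_ln sig1) by auto.
     assert (Hle : ln sig1 <= - ell) by (unfold ell; lra).
     destruct (Rle_lt_or_eq_dec _ _ Hle) as [H'|H']; [left; apply exp_increasing; auto | right; rewrite H'; auto]. }
   pose proof (Z_upper s0 tn sig1 Hs1p ltac:(lra) Hsig Ht1) as ZB. rewrite Hs0 in ZB.
   pose proof (w_pos lam0 tn) as Hw.
   set (r := ln (Z lam0 tn) - ln (w lam0 tn)).
   assert (hr : 0 <= r <= u + tR * lnX1).
   { unfold r. split.
     - assert (ln (w lam0 tn) <= ln (Z lam0 tn)) by (apply ln_le; auto; lra). lra.
     - assert (ln (Z lam0 tn) <= ln (INR tn * ((/ sig1) ^ tn * w lam0 tn))) by (apply ln_le; [lra| tauto]).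
       assert (0 < (/ sig1) ^ tn) by (apply pow_lt; apply Rinv_0_lt_compat; lra).
       rewrite !ln_mult, ln_pow, ln_Rinv in H0 by (try lra; try apply Rinv_0_lt_compat; try lra; apply Rmult_lt_0_compat; lra).
       fold tR u in H0. unfold lnX1 in *. lra. }
   set (F := ln (INR (Factorial.fact tn))).
   assert (hF : 0 <= F <= tR * u).
   { unfold F. pose proof (fact_pos tn). pose proof (fact_le_pow tn). split.
     rewrite <- ln_1. apply ln_le; lra. apply Rle_trans with (ln (INR tn ^ tn)). apply ln_le; lra.
     rewrite ln_pow by lra. fold tR u. lra. }
   set (lnrho := ln rho).
   assert (hlr : 0 <= lnrho <= 4 + lnL).
   { assert (2 <= rho). { unfold rho. apply Rmult_le_reg_r with k; auto. unfold Rdiv. rewrite Rmult_assoc, Rinv_l by lra. lra. }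
     unfold lnrho. split. rewrite <- ln_1. apply ln_le; lra.
     apply Rle_trans with (ln (5 * L)). apply ln_le; lra. rewrite ln_mult by lra. pose proof ln_small_const. unfold lnL; lra. }
   pose proof (dK_bound (ln 2) L lnL LL tR rho C c1 c2 B0 (INR M) h2 hc hC hB hM hL hlnL hLL ht hrho ht0 u ell hu hell F r lnrho lnX1 hF hX1 hr hlr) as DB.
   assert (EK : ln k = L - lnrho). { unfold lnrho, rho, L. rewrite ln_div by lra. ring. }
   assert (EZ : ln (Z lam0 tn) = tR * (tR - 1) / 2 * ln 2 + tR * u - tR * ell - F + r).
   { unfold r. rewrite ln_w_t, ln_d. fold tR F. unfold ell. field. }
   rewrite EK, EZ. fold L lnL. 
   replace (tR * (tR - 1) / 2 * ln 2 + tR * u - tR * ell - F + r - (L - lnrho) - 2 / ln 2 * L ^ 2)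
     with (tR * (tR - 1) / 2 * ln 2 + tR * u - tR * ell - F + r - L + lnrho - 2 / ln 2 * L ^ 2) by ring.
   exact DB.
Qed.
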